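(* Let $(\mathfrak{g},[\cdot,\cdot]_{\mathfrak{g}},\phi_{\mathfrak{g}})$ be a finite-dimensional Hom-Lie algebra with a nondegenerate symmetric invariant bilinear form $\mathfrak B$. Then $\mathfrak g$ is weakly involutive, and $(\mathfrak g,\phi_{\mathfrak g},\mathrm{ad})$ and $(\mathfrak g^*,\phi_{\mathfrak g}^*,\mathrm{ad}^\circ)$ are equivalent representations of $\mathfrak g$. Conversely, if $\mathfrak g$ is weakly involutive and $(\mathfrak g,\phi_{\mathfrak g},\mathrm{ad})$ and $(\mathfrak g^*,\phi_{\mathfrak g}^*,\mathrm{ad}^\circ)$ are equivalent representations of $\mathfrak g$, then there exists a nondegenerate invariant bilinear form on $\mathfrak g$.
   Context: A Hom-Lie algebra $(\mathfrak{g},[\cdot,\cdot]_{\mathfrak{g}},\phi_{\mathfrak{g}})$: skew-symmetric bilinear bracket and linear map with $\phi_{\mathfrak g}[x,y]=[\phi_{\mathfrak g}x,\phi_{\mathfrak g}y]$ and $[\phi_{\mathfrak g}(x),[y,z]]+[\phi_{\mathfrak g}(y),[z,x]]+[\phi_{\mathfrak g}(z),[x,y]]=0$; weakly involutive if $[\phi_{\mathfrak g}^2(x),y]_{\mathfrak g}=[x,y]_{\mathfrak g}$ for all $x,y$. A representation $(V,\beta,\rho)$: $\beta\in\mathfrak{gl}(V)$, $\rho:\mathfrak g\to\mathfrak{gl}(V)$ with $\rho(\phi_{\mathfrak g}(x))\beta=\beta\rho(x)$ and $\rho([x,y])\beta=\rho(\phi_{\mathfrak g}(x))\rho(y)-\rho(\phi_{\mathfrak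 g}(y))\rho(x)$. Adjoint: $\mathrm{ad}_xy=[x,y]_{\mathfrak g}$. $\mathrm{ad}^\circ_xa\in\mathfrak g^*$: $\langle\mathrm{ad}^\circ_xa,y\rangle=-\langle a,[\phi_{\mathfrak g}(x),y]_{\mathfrak g}\rangle$. Two representations $(V,\beta,\rho)$, $(V',\beta',\rho')$ are equivalent if there is a linear isomorphism $\varphi:V\to V'$ with $\varphi\rho(x)=\rho'(x)\varphi$ for all $x$ and $\beta'\varphi=\varphi\beta$. A bilinear form $\mathfrak B$ on $\mathfrak g$ is invariant if $\mathfrak B([x,y]_{\mathfrak g},z)=\mathfrak B(x,[\phi_{\mathfrak g}(y),z]_{\mathfrak g})$ and $\mathfrak B(\phi_{\mathfrak g}(x),y)=\mathfrak B(x,\phi_{\mathfrak g}(y))$ for all $x,y,z$. *)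

(* Defs.v *)
From HB Require Import structures.
From mathcomp Require Import all_boot all_order all_algebra.
Set Implicit Arguments. Unset Strict Implicit. Unset Printing Implicit Defensive.
Import GRing.Theory.
Local Open Scope ring_scope.

Section HomLie.
Variable K : fieldType.

Definition is_lin (U W : lmodType K) (f : U -> W) : Prop :=
  forall (a : K) (x y : U), f (a *: x + y) = a *: f x + f y.

Variable g : vectType K.

Definition hom_lie (br : g -> g -> g) (phi : g -> g) : Prop :=
  [/\ (forall x, is_lin (br x)) /\ (forall y, is_lin (fun x => br x y)),
      forall x y, br x y = - br y x,
      is_lin phi,
      forall x y, phi (br x y) = br (phi x) (phi y)
    & forall x y z,
      br (phi x) (br y z) + br (phi y) (br z x) + br (phi z) (br x y) = 0].

Definition weakly_involutive (br : g -> g -> g) (phi : g -> g) : Prop :=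
  forall x y, br (phi (phi x)) y = br x y.

Definition is_rep (br : g -> g -> g) (phi : g -> g)
    (W : vectType K) (beta : W -> W) (rho : g -> W -> W) : Prop :=
  [/\ is_lin beta,
      forall x, is_lin (rho x),
      forall a x y w, rho (a *: x + y) w = a *: rho x w + rho y w,
      forall x w, rho (phi x) (beta w) = beta (rho x w)
    & forall x y w,
      rho (br x y) (beta w) = rho (phi x) (rho y w) - rho (phi y) (rho x w)].

Definition rep_equiv (W W' : vectType K) (beta : W -> W) (rho : g -> W -> W)
    (beta' : W' -> W') (rho' : g -> W' -> W') : Prop :=
  exists f : W -> W',
    [/\ is_lin f, bijective f,
        forall x w, f (rho x w) = rho' x (f w)
      & forall w, beta' (f w) = f (beta w)].

Definition dual := 'Hom(g, K^o).

Definition ad (br : g -> g -> g) : g -> g -> g := fun x y => br x y.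

Definition dual_map (phi : g -> g) : dual -> dual :=
  fun a => linfun (fun y : g => (a (phi y) : K^o)).

Definition ad_circ (br : g -> g -> g) (phi : g -> g) : g -> dual -> dual :=
  fun x a => linfun (fun y : g => (- a (br (phi x) y) : K^o)).

Definition invariant_form_hl (br : g -> g -> g) (phi : g -> g) (B : g -> g -> K) :=
  (forall x y z, B (br x y) z = B x (br (phi y) z)) /\
  (forall x y, B (phi x) y = B x (phi y)).

Definition bilin_form_hl (B : g -> g -> K) : Prop :=
  (forall x, is_lin (B x : g -> K^o)) /\ (forall y, is_lin ((fun x => B x y) : g -> K^o)).

Definition symm_form_hl (B : g -> g -> K) : Prop := forall x y, B x y = B y x.

Definition nondegen_hl (B : g -> g -> K) : Prop :=
  (forall x, (forall y, B x y = 0) -> x = 0) /\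
  (forall y, (forall x, B x y = 0) -> y = 0).

End HomLie.

(* Main.v *)
Require Import Defs.
From HB Require Import structures.
From mathcomp Require Import all_boot all_order all_algebra.
Local Open Scope ring_scope.
Import GRing.Theory.

Section L.
Variables (K : fieldType) (U W : vectType K) (f : U -> W) (Hf : is_lin f).
Definition flin := f.
Lemma flin_lin : linear flin.
Proof. by move=> a x y; rewrite /flin Hf. Qed.
HB.instance Definition _ := GRing.isLinear.Build K U W *:%R flin flin_lin.
Lemma linfunE_lin : linfun f =1 f.
Proof. exact: (lfunE flin). Qed.
End L.

Section Lin.
Context {K : fieldType} {U W : lmodType K} {f : U -> W} (Hf : is_lin f).
Lemma lin0 : f 0 = 0.
Proof.
have := Hf 1 0 0; rewrite !scale1r addr0 => E.
by apply: (@addrI _ (f 0)); rewrite addr0 -E.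
Qed.
Lemma linD x y : f (x + y) = f x + f y.
Proof. by have := Hf 1 x y; rewrite !scale1r. Qed.
Lemma linZ a x : f (a *: x) = a *: f x.
Proof. by have := Hf a x 0; rewrite !addr0 lin0 addr0. Qed.
Lemma linN x : f (- x) = - f x.
Proof. by rewrite -scaleN1r linZ scaleN1r. Qed.
Lemma linB x y : f (x - y) = f x - f y.
Proof. by rewrite linD linN. Qed.
End Lin.

Section HL.
Context {K : fieldType} {g : vectType K} {br : g -> g -> g} {phi : g -> g}.
Hypothesis HL : hom_lie br phi.

Let brL x : is_lin (br x). Proof. by case: HL => [[]]. Qed.
Let brR y : is_lin (fun x => br x y). Proof. by case: HL => [[]]. Qed.
Let skew x y : br x y = - br y x. Proof. by case: HL. Qed.
Let phiL : is_lin phi. Proof. by case: HL. Qed.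
Let phiM x y : phi (br x y) = br (phi x) (phi y). Proof. by case: HL. Qed.
Let jac x y z : br (phi x) (br y z) + br (phi y) (br z x) + br (phi z) (br x y) = 0.
Proof. by case: HL. Qed.

Lemma jac_ad x y w :
  br (br x y) (phi w) = br (phi x) (br y w) - br (phi y) (br x w).
Proof.
rewrite (skew x w) (linN (brL _)) opprK.
have := jac w x y; rewrite (skew (phi w)) => /eqP.
by rewrite -addrA addrC subr_eq0 => /eqP ->.
Qed.

Lemma ad_rep : is_rep br phi phi (ad br).
Proof.
split => //; try by move=> x y w; rewrite /ad jac_ad.
- move=> a x y w; exact: (brR w).
Qed.

Lemma dual_lin1 (a : dual g) (h : g -> g) : is_lin h -> is_lin (fun y => (a (h y) : K^o)).
Proof. by move=> Hh k u v; rewrite Hh linearP. Qed.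

Lemma dmE a y : dual_map phi a y = a (phi y).
Proof. by rewrite /dual_map linfunE_lin //; apply: dual_lin1. Qed.

Lemma acE x a y : ad_circ br phi x a y = - a (br (phi x) y).
Proof.
rewrite /ad_circ linfunE_lin // => k u v.
by rewrite brL linearP /= opprD -scalerN.
Qed.

Hypothesis WI : weakly_involutive br phi.

Lemma dual_rep : is_rep br phi (dual_map phi) (ad_circ br phi).
Proof.
split.
- by move=> k u v; apply/lfunP => y; rewrite add_lfunE scale_lfunE !dmE add_lfunE scale_lfunE.
- move=> x k u v; apply/lfunP => y.
  by rewrite add_lfunE scale_lfunE !acE add_lfunE scale_lfunE /= opprD ?mulrN ?scalerN.
- move=> k x y w; apply/lfunP => z.
  rewrite add_lfunE scale_lfunE !acE phiL (brR z) linearP /= opprD ?mulrN ?scalerN.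
  by [].
- move=> x w; apply/lfunP => y.
  by rewrite acE !dmE acE phiM WI.
- move=> x y w; apply/lfunP => z.
  rewrite add_lfunE opp_lfunE !acE dmE ?acE.
  rewrite !opprK !WI phiM WI jac_ad linearB opprB.
  by [].
Qed.

End HL.

Lemma dim_dual (K : fieldType) (g : vectType K) : \dim {: dual g} = \dim {: g}.
Proof. rewrite !dimvf /dual. exact: muln1. Qed.

Section V.
Import VectorInternalTheory.
Lemma vec_sep (K : fieldType) (g : vectType K) (x : g) :
  (forall a : dual g, a x = 0) -> x = 0.
Proof.
move=> H0.
pose a (i : 'I_(dim g)) : dual g := linfun (fun v : g => (v2r v 0 i : K^o)).
have aE i v : a i v = v2r v 0 i.
  rewrite linfunE_lin // => k u w.
  by rewrite linearP !mxE.
apply: v2r_inj; rewrite linear0; apply/rowP => i.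
by rewrite mxE -aE H0.
Qed.
End V.

Theorem proposition2p15 (K : fieldType) (g : vectType K)
    (br : g -> g -> g) (phi : g -> g) :
  hom_lie br phi ->
  ((exists B : g -> g -> K,
      [/\ bilin_form_hl B, symm_form_hl B, nondegen_hl B
        & invariant_form_hl br phi B]) ->
     [/\ weakly_involutive br phi,
         is_rep br phi phi (ad br),
         is_rep br phi (dual_map phi) (ad_circ br phi)
       & rep_equiv phi (ad br) (dual_map phi) (ad_circ br phi)]) /\
  ((weakly_involutive br phi /\
    [/\ is_rep br phi phi (ad br),
        is_rep br phi (dual_map phi) (ad_circ br phi)
      & rep_equiv phi (ad br) (dual_map phi) (ad_circ br phi)]) ->
     exists B : g -> g -> K,
       [/\ bilin_form_hl B, nondegen_hl B & invariant_form_hl br phi B]).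
Proof.
move=> HL.
have dmE := dmE HL; have acE := acE HL.
have [[brL brR] skew phiL phiM jac] := HL.
split.
- case=> B [[BL BR] Bsym [nd1 nd2] [inv1 inv2]].
  have stepA : forall z x, br (phi (phi z)) (phi x) = br z (phi x).
    move=> z x; apply/eqP; rewrite -subr_eq0; apply/eqP; apply: nd2 => y.
    rewrite (linB (BL y)); apply/eqP; rewrite subr_eq0; apply/eqP.
    transitivity (B (br x y) z).
      by symmetry; rewrite inv1 (Bsym x) inv1 inv2 phiM.
    rewrite skew (linN (BR z)) inv1 -(linN (BL y)); congr (B y _).
    by rewrite skew opprK.
  have WI : weakly_involutive br phi.
    move=> x y; apply/eqP; rewrite -subr_eq0; apply/eqP; apply: nd1 => u.
    rewrite (linB (BR u)); apply/eqP; rewrite subr_eq0; apply/eqP.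
    rewrite inv1 inv2 inv2 !phiM.
    rewrite (stepA (phi y) (phi u)) skew stepA -skew.
    by rewrite inv1.
  split => //; [exact: (ad_rep HL) | exact: (dual_rep HL WI) |].
  pose F (x : g) : dual g := linfun (fun y => (B x y : K^o)).
  have FE x y : F x y = B x y by rewrite linfunE_lin.
  have FL : is_lin F.
    by move=> k u v; apply/lfunP => y; rewrite add_lfunE scale_lfunE !FE BR.
  have Finj : injective F.
    move=> x x' /lfunP E; apply/eqP; rewrite -subr_eq0; apply/eqP; apply: nd1 => y.
    by rewrite (linB (BR y)) -!FE E subrr.
  pose H : 'Hom(g, dual g) := linfun F.
  have HE x : H x = F x by rewrite linfunE_lin.
  have Hker : lker H == 0%VS.
    by apply/lker0P => x y; rewrite !HE => /Finj.
  have Himg : limg H = fullv.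
    apply/eqP; rewrite eqEdim subvf /=.
    have := limg_ker_dim H fullv; rewrite (eqP Hker) capv0 dimv0 add0n => ->.
    by rewrite dim_dual.
  exists F; split => //.
  + exists (H^-1)%VF.
      by move=> x; rewrite -HE (lker0_lfunK Hker).
    by move=> a; rewrite -HE limg_lfunVK // Himg memvf.
  + move=> x w; apply/lfunP => y; rewrite acE FE /ad.
    by rewrite FE -inv1 skew (linN (BR y)) ?opprK.
  + move=> w; apply/lfunP => y; rewrite dmE !FE.
    by rewrite inv2.
- case=> WI [_ _ [f [fL [finv fK fKV] fE fB]]].
  exists (fun x y => f y x); split.
  + split.
    * by move=> x k u v; rewrite fL add_lfunE scale_lfunE.
    * by move=> y k u v; rewrite linearP.
  + split.
    * move=> x H0; apply: vec_sep => a.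
      by rewrite -(fKV a) H0.
    * move=> y H0.
      have fy0 : f y = 0 by apply/lfunP => x; rewrite zero_lfunE H0.
      by rewrite -(fK y) fy0 -(lin0 fL) fK.
  + split.
    * move=> x y z; rewrite fE acE WI skew linearN.
      by [].
    * by move=> x y; rewrite -fB dmE.
Qed.
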